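(* Let $M$ be a principally Goldie*-lifting right $R$-module and $N$ a submodule of $M$. If $(N+D)/N$ is a direct summand of $M/N$ for every cyclic direct summand $D$ of $M$, then $M/N$ is principally Goldie*-lifting.
   Context: $R$ is an associative ring with identity; modules are unital right $R$-modules. $K\ll L$ means $K$ is small in $L$. For submodules $X,Y$ of a module $L$, $X\,\beta^*\,Y$ in $L$ means $(X+Y)/X\ll L/X$ and $(X+Y)/Y\ll L/Y$. A module $L$ is principally Goldie*-lifting if for every cyclic submodule $X$ of $L$ there is a direct summand $D$ of $L$ with $X\,\beta^*\,D$. *)

(* Defs.v *)
(* Modules over a ring R; right R-modules are rendered as
   left modules over the converse ring R^c (so  a *: x  means  x·a). *)
From HB Require Import structures.
From mathcomp Require Import all_boot all_order all_algebra.
Set Implicit Arguments. Unset Strict Implicit. Unset Printing Implicit Defensive.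
Import GRing.Theory.
Local Open Scope ring_scope.

Section ModuleNotions.
Variables (S : pzRingType) (M : lmodType S).

Definition submod (X : M -> Prop) : Prop :=
  [/\ X 0, (forall x y, X x -> X y -> X (x + y)) & (forall a x, X x -> X (a *: x))].

Definition sumS (X Y : M -> Prop) : M -> Prop :=
  fun m => exists x y, [/\ X x, Y y & m = x + y].

Definition subS (X Y : M -> Prop) : Prop := forall m, X m -> Y m.

Definition eqS (X Y : M -> Prop) : Prop := forall m, X m <-> Y m.

Definition cyclicS (x : M) : M -> Prop := fun m => exists a : S, m = a *: x.

Definition is_cyclic (X : M -> Prop) : Prop := exists x, eqS X (cyclicS x).

Definition direct_summand (D : M -> Prop) : Prop :=
  submod D /\ exists D' : M -> Prop,
    [/\ submod D', (forall m, sumS D D' m) & (forall m, D m -> D' m -> m = 0)].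

(* K/X << M/X, for submodules X <= K of M.  By the correspondence theorem the
   submodules of M/X are exactly the T/X with X <= T <= M, and
   K/X + T/X = M/X  iff  K + T = M. *)
Definition small_quot (X K : M -> Prop) : Prop :=
  forall T, submod T -> subS X T -> (forall m, sumS K T m) -> forall m, T m.

Definition beta_star (X Y : M -> Prop) : Prop :=
  small_quot X (sumS X Y) /\ small_quot Y (sumS X Y).

Definition principally_Goldie_star_lifting : Prop :=
  forall x : M, exists D, direct_summand D /\ beta_star (cyclicS x) D.

End ModuleNotions.

Definition imageS (A B : Type) (f : A -> B) (X : A -> Prop) : B -> Prop :=
  fun b => exists a, X a /\ b = f a.

(* Main.v *)
Require Import Defs.
From HB Require Import structures.
From mathcomp Require Import all_boot all_order all_algebra.
Import GRing.Theory.
Local Open Scope ring_scope.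

Section Aux.
Variables (S : pzRingType) (M : lmodType S).

Lemma submod_opp (X : M -> Prop) x : submod X -> X x -> X (- x).
Proof. by case=> _ _ Hs Hx; rewrite -scaleN1r; apply: Hs. Qed.

Lemma submod_sub (X : M -> Prop) x y : submod X -> X x -> X y -> X (x - y).
Proof. move=> H Hx Hy; case: (H) => _ Ha _; apply: Ha => //; exact: submod_opp. Qed.

Lemma summand_cyclic (x : M) (D : M -> Prop) :
  direct_summand D -> beta_star (cyclicS x) D -> is_cyclic D.
Proof.
move=> [HD [D' [HD' Hsum Hint]]] [Hs _].
have Hall : forall y, sumS (cyclicS x) D' y.
  apply: (Hs (sumS (cyclicS x) D')).
  - case: HD' => D'0 D'a D's; split.
    + by exists 0, 0; split=> //; [exists 0; rewrite scale0r | rewrite addr0].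
    + move=> y z [a [b [[c ->] Hb ->]]] [a' [b' [[c' ->] Hb' ->]]].
      exists ((c + c') *: x), (b + b'); split; first by exists (c + c').
        exact: D'a.
      by rewrite scalerDl addrACA.
    + move=> s y [a [b [[c ->] Hb ->]]]; exists ((s * c) *: x), (s *: b).
      split; [by exists (s * c) | exact: D's | by rewrite scalerDr scalerA].
  - move=> y Hy; exists y, 0; split=> //; last by rewrite addr0.
    by case: HD'.
  - move=> y; case: (Hsum y) => d [d' [Hd Hd' ->]].
    exists d, d'; split=> //.
      by exists 0, d; split=> //; [exists 0; rewrite scale0r | rewrite add0r].
    by exists 0, d'; split=> //; [exists 0; rewrite scale0r | rewrite add0r].
case: (Hsum x) => e [e' [He He' Hx]].
exists e => y; split.
- move=> Hy; case: (Hall y) => z [d' [[a ->] Hd' Hyz]].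
  exists a; apply/eqP; rewrite -subr_eq0; apply/eqP.
  apply: Hint; first by apply: submod_sub => //; case: HD => _ _; apply.
  have -> : y - a *: e = a *: e' + d' by rewrite Hyz Hx scalerDr addrC !addrA addNr add0r.
  case: HD' => _ Ha Hsc; apply: Ha => //; exact: Hsc.
- by move=> [a ->]; case: HD => _ _; apply.
Qed.
End Aux.

Theorem proposition3p10 (R : pzRingType) (M : lmodType R^c) (N : M -> Prop)
    (Q : lmodType R^c) (f : {linear M -> Q}) :
  principally_Goldie_star_lifting M ->
  submod N ->
  (forall q : Q, exists m : M, f m = q) ->
  (forall m : M, f m = 0 <-> N m) ->
  (forall D : M -> Prop, direct_summand D -> is_cyclic D ->
     direct_summand (imageS f D)) ->
  principally_Goldie_star_lifting Q.
Proof.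
move=> HM _ Hsurj _ Himg q.
case: (Hsurj q) => m Hm.
case: (HM m) => D [HD Hb].
have HDc := @summand_cyclic _ _ m D HD Hb.
exists (imageS f D); split; first exact: Himg.
have pull : forall (X : M -> Prop) (Y : Q -> Prop),
   (forall x, X x -> Y (f x)) -> small_quot X (sumS (cyclicS m) D) ->
   small_quot Y (sumS (cyclicS q) (imageS f D)).
  move=> X Y HXY Hsm T HT HYT Hall t.
  have HT' : submod (fun x => T (f x)).
    case: HT => T0 Ta Ts; split; first by rewrite linear0.
      by move=> x y Hx Hy; rewrite linearD; apply: Ta.
    by move=> a x Hx; rewrite linearZ; apply: Ts.
  have Hall' : forall x, sumS (sumS (cyclicS m) D) (fun x => T (f x)) x.
    move=> x; case: (Hall (f x)) => u [t0 [[c [d [[a ->] [d0 [Hd0 ->]] ->]]] Ht0 Hfx]].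
    exists (a *: m + d0), (x - (a *: m + d0)); split.
    - by exists (a *: m), d0; split=> //; exists a.
    - by rewrite linearB linearD linearZ Hm Hfx addrAC subrr add0r.
    - by rewrite addrC subrK.
  case: (Hsurj t) => x <-.
  apply: (Hsm _ HT') => //; move=> y Hy; exact: HYT (HXY _ Hy).
case: Hb => H1 H2; split.
- apply: (pull (cyclicS m)) => // x [a ->]; exists a; by rewrite linearZ Hm.
- apply: (pull D) => // x Hx; by exists x.
Qed.
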